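(* Let $X$ be a nonempty set and $d$ a reflexive triangular symmetric on $X$ such that $(X,d)$ is 0-complete. Let $T:X\to X$, $G\in\{M_1,M_2,M_3\}$, and suppose $d(Tx,Ty)\le\varphi(G(x,y))$ for all $x,y\in X$, for some nearly right admissible asymptotic normal function $\varphi:[0,\infty)\to[0,\infty)$. Then $T$ is a global Picard operator (modulo $d$).
   Context: A symmetric on $X$ is a map $d:X\times X\to[0,\infty)$ with $d(x,y)=d(y,x)$; it is reflexive triangular if $d(x,z)+d(y,y)\le d(x,y)+d(y,z)$ for all $x,y,z$. A sequence $(x_n)$ $0d$-converges to $x$ if $d(x_n,x)\to0$; it is $0d$-convergent if such $x$ exists; it is $0d$-Cauchy if for every $\varepsilon>0$ there is $j$ with $d(x_m,x_n)<\varepsilon$ whenever $j\le m<n$. $(X,d)$ is 0-complete if every $0d$-Cauchy sequence is $0d$-convergent. A nonempty $Y\subseteq X$ is $d$-singleton if $d(y_1,y_2)=0$ for all $y_1,y_2\in Y$. $\mathrm{Fix}(T;d)=\{z: d(z,Tz)=0\}$. $T$ is a global Picard operator (modulo $d$) if for every $x\in X$ the sequence $(T^nx)$ is $0d$-convergent and every point to which it $0d$-converges lies in $\mathrm{Fix}(T;d)$, and moreover $\mathrm{Fix}(T;d)$ is $d$-singleton. Notation: $M_1(x,y)=d(x,y)$, $H(x,y)=\max\{d(x,Tx),d(y,Ty)\}$, $L(x,y)=\frac12[d(x,Ty)+d(Tx,y)]$, $M_2=\max\{M_1,H\}$, $M_3=\max\{M_1,H,L\}$. $\varphi$ is normal if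 $\varphi(0)=0$ and $\varphi(t)<t$ for $t>0$; asymptotic normal if normal and every sequence $(r_n)$ in $[0,\infty)$ with $r_{n+1}\le\varphi(r_n)$ for all $n$ tends to $0$; nearly right admissible if normal and there is a countable $Q\subseteq(0,\infty)$ with $\max\{\limsup_{t\to s+}\varphi(t),\varphi(s)\}<s$ for all $s\in(0,\infty)\setminus Q$. *)

(* Defs.v *)
From Stdlib Require Import Reals.
Open Scope R_scope.

Section Defs.
Context {X : Type}.

Definition is_symmetric (d : X -> X -> R) : Prop :=
  forall x y, 0 <= d x y /\ d x y = d y x.

Definition reflexive_triangular (d : X -> X -> R) : Prop :=
  forall x y z, d x z + d y y <= d x y + d y z.

Definition zd_converges_to (d : X -> X -> R) (u : nat -> X) (x : X) : Prop :=
  Un_cv (fun n => d (u n) x) 0.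

Definition zd_convergent (d : X -> X -> R) (u : nat -> X) : Prop :=
  exists x, zd_converges_to d u x.

Definition zd_Cauchy (d : X -> X -> R) (u : nat -> X) : Prop :=
  forall eps, eps > 0 -> exists j : nat,
    forall m n : nat, (j <= m)%nat -> (m < n)%nat -> d (u m) (u n) < eps.

Definition zero_complete (d : X -> X -> R) : Prop :=
  forall u : nat -> X, zd_Cauchy d u -> zd_convergent d u.

Definition d_singleton (d : X -> X -> R) (Y : X -> Prop) : Prop :=
  (exists y, Y y) /\ forall y1 y2, Y y1 -> Y y2 -> d y1 y2 = 0.

Definition Fix (T : X -> X) (d : X -> X -> R) : X -> Prop :=
  fun z => d z (T z) = 0.

Definition global_Picard (T : X -> X) (d : X -> X -> R) : Prop :=
  (forall x : X,
     zd_convergent d (fun n => Nat.iter n T x) /\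
     forall z, zd_converges_to d (fun n => Nat.iter n T x) z -> Fix T d z) /\
  d_singleton d (Fix T d).

Definition M1 (d : X -> X -> R) (x y : X) : R := d x y.
Definition Hf (T : X -> X) (d : X -> X -> R) (x y : X) : R :=
  Rmax (d x (T x)) (d y (T y)).
Definition Lf (T : X -> X) (d : X -> X -> R) (x y : X) : R :=
  / 2 * (d x (T y) + d (T x) y).
Definition M2 (T : X -> X) (d : X -> X -> R) (x y : X) : R :=
  Rmax (M1 d x y) (Hf T d x y).
Definition M3 (T : X -> X) (d : X -> X -> R) (x y : X) : R :=
  Rmax (Rmax (M1 d x y) (Hf T d x y)) (Lf T d x y).

End Defs.

Inductive Gchoice := G_M1 | G_M2 | G_M3.

Definition Gfun {X : Type} (g : Gchoice) (T : X -> X) (d : X -> X -> R) : X -> X -> R :=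
  match g with
  | G_M1 => M1 d
  | G_M2 => M2 T d
  | G_M3 => M3 T d
  end.

(** phi : [0,oo) -> [0,oo), represented as a function R -> R mapping [0,oo) into [0,oo). *)
Definition maps_nonneg (phi : R -> R) : Prop :=
  forall t, 0 <= t -> 0 <= phi t.

Definition normal (phi : R -> R) : Prop :=
  phi 0 = 0 /\ forall t, t > 0 -> phi t < t.

Definition asymptotic_normal (phi : R -> R) : Prop :=
  normal phi /\
  forall r : nat -> R, (forall n, 0 <= r n) -> (forall n, r (S n) <= phi (r n)) ->
    Un_cv r 0.

(** max { limsup_{t -> s+} phi t , phi s } < s, written out:
    phi s < s and there are c < s and delta > 0 with phi t <= c on (s, s+delta). *)
Definition right_adm_at (phi : R -> R) (s : R) : Prop :=
  phi s < s /\
  exists c delta, c < s /\ delta > 0 /\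
    forall t, s < t < s + delta -> phi t <= c.

(** A countable Q ⊆ (0,oo) is represented as (contained in) the range of a sequence q. *)
Definition nearly_right_admissible (phi : R -> R) : Prop :=
  normal phi /\
  exists q : nat -> R,
    forall s, s > 0 -> (forall n, q n <> s) -> right_adm_at phi s.

(* Main.v *)
Require Import Defs.
From Stdlib Require Import Reals Lra Lia Classical.
Open Scope R_scope.


Definition trisect (h : R) (p : R*R) : R*R :=
  let a := fst p in let b := snd p in
  if Rle_dec a h then
    (if Rle_dec h (a + (b-a)/3) then (b - (b-a)/3, b) else (a, a+(b-a)/3))
  else (a, a + (b-a)/3).

Lemma trisect_ok h a b : a < b ->
  a <= fst (trisect h (a,b)) /\ fst (trisect h (a,b)) < snd (trisect h (a,b)) /\
  snd (trisect h (a,b)) <= b /\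
  ~(fst (trisect h (a,b)) <= h <= snd (trisect h (a,b))).
Proof.
  intros Hab. unfold trisect; simpl.
  destruct (Rle_dec a h); [destruct (Rle_dec h (a + (b-a)/3))|]; simpl;
  repeat split; try lra; intros [? ?]; lra.
Qed.

Fixpoint Iv (q : nat -> R) (e : R) (n : nat) : R*R :=
  match n with O => (e/3, 2*e/3) | S k => trisect (q k) (Iv q e k) end.

Lemma Iv_lt q e : 0 < e -> forall n, fst (Iv q e n) < snd (Iv q e n).
Proof.
  intros He n; induction n; simpl. lra.
  destruct (Iv q e n) as [a b]; simpl in *. apply trisect_ok; auto.
Qed.

Lemma Iv_step q e : 0 < e -> forall n,
  fst (Iv q e n) <= fst (Iv q e (S n)) /\ snd (Iv q e (S n)) <= snd (Iv q e n) /\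
  ~(fst (Iv q e (S n)) <= q n <= snd (Iv q e (S n))).
Proof.
  intros He n. pose proof (Iv_lt q e He n) as H. simpl.
  destruct (Iv q e n) as [a b]; simpl in *.
  destruct (trisect_ok (q n) a b H) as [? [? [? ?]]]. auto.
Qed.

Lemma Iv_mono q e : 0 < e -> forall n m, (n <= m)%nat ->
  fst (Iv q e n) <= fst (Iv q e m) /\ snd (Iv q e m) <= snd (Iv q e n).
Proof.
  intros He n m H; induction H. lra.
  destruct (Iv_step q e He m) as [? [? ?]]. lra.
Qed.

Lemma Iv_ab q e : 0 < e -> forall n m, fst (Iv q e n) <= snd (Iv q e m).
Proof.
  intros He n m.
  destruct (Iv_mono q e He n (n+m)) as [H1 _]; [lia|].
  destruct (Iv_mono q e He m (n+m)) as [_ H2]; [lia|].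
  pose proof (Iv_lt q e He (n+m)). lra.
Qed.

Lemma avoid_seq (q : nat -> R) (e : R) : 0 < e ->
  exists s, 0 < s < e /\ forall n, q n <> s.
Proof.
  intros He.
  destruct (completeness (fun x => exists n, x = fst (Iv q e n))) as [l [Hub Hl]].
  - exists (snd (Iv q e 0)). intros x [n ->]. apply Iv_ab; auto.
  - exists (fst (Iv q e 0)); eauto.
  - assert (Hlo : forall n, fst (Iv q e n) <= l) by (intro n; apply Hub; eauto).
    assert (Hhi : forall m, l <= snd (Iv q e m)).
    { intro m. apply Hl. intros x [n ->]. apply Iv_ab; auto. }
    exists l. split.
    + pose proof (Hlo 0%nat). pose proof (Hhi 0%nat). simpl in *. lra.
    + intros n Hn. destruct (Iv_step q e He n) as [_ [_ H]]. apply H.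
      rewrite Hn. auto.
Qed.

Section S.
Context {X : Type}.

Lemma tri (d : X -> X -> R) : is_symmetric d -> reflexive_triangular d ->
  forall x y z, d x z <= d x y + d y z.
Proof. intros Hs Hr x y z. pose proof (Hr x y z). destruct (Hs y y). lra. Qed.

Lemma phi_le phi : normal phi -> forall t, 0 <= t -> phi t <= t.
Proof. intros [H0 H] t Ht. destruct Ht as [Ht|<-]. apply Rlt_le, H; auto. lra. Qed.

Lemma r_step (d : X -> X -> R) T g phi :
  is_symmetric d -> reflexive_triangular d -> normal phi ->
  (forall x y, d (T x) (T y) <= phi (Gfun g T d x y)) ->
  forall a, d (T a) (T (T a)) <= phi (d a (T a)).
Proof.
  intros Hs Hr Hn Hc a. pose proof (Hc a (T a)) as H.
  pose proof (Hr a (T a) (T (T a))) as HR.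
  assert (0 <= d a (T a)) by apply Hs.
  destruct g; simpl in H; unfold M2, M3, Hf, M1, Lf in *; [exact H| |];
  set (r0 := d a (T a)) in *; set (r1 := d (T a) (T (T a))) in *;
  (destruct (Rle_dec r1 r0) as [Hle|Hlt];
   [ replace (Rmax r0 (Rmax r0 r1)) with r0 in H
       by (rewrite (Rmax_left r0 r1), Rmax_left; lra);
     try (rewrite Rmax_left in H by lra); exact H
   | exfalso; assert (Hp : phi r1 < r1) by (apply Hn; lra);
     replace (Rmax r0 (Rmax r0 r1)) with r1 in H
       by (rewrite (Rmax_right r0 r1), Rmax_right; lra);
     try (rewrite Rmax_left in H by lra); lra ]).
Qed.


Lemma first_cross (P : nat -> Prop) a b : ~ P a -> P b -> (a <= b)%nat ->
  exists k, (a <= k)%nat /\ (k < b)%nat /\ ~ P k /\ P (S k).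
Proof.
  intros Ha Pb Hab. induction b.
  - assert (a = 0%nat) by lia. subst. contradiction.
  - destruct (Nat.eq_dec a (S b)) as [E|E]; [subst; contradiction|].
    destruct (classic (P b)) as [Pb'|Pb'].
    + destruct (IHb Pb' ltac:(lia)) as [k [? [? [? ?]]]]. exists k. repeat split; auto; lia.
    + exists b. repeat split; auto; lia.
Qed.

Lemma cv_small (r : nat -> R) : Un_cv r 0 -> forall e, e > 0 ->
  exists N, forall n, (n >= N)%nat -> r n < e.
Proof.
  intros H e He. destruct (H e He) as [N HN]. exists N. intros n Hn.
  specialize (HN n Hn). unfold R_dist in HN. rewrite Rminus_0_r in HN.
  pose proof (Rle_abs (r n)). lra.
Qed.

Lemma cauchy (d : X -> X -> R) T g phi (u : nat -> X) :
  is_symmetric d -> reflexive_triangular d -> nearly_right_admissible phi ->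
  (forall x y, d (T x) (T y) <= phi (Gfun g T d x y)) ->
  (forall n, u (S n) = T (u n)) ->
  Un_cv (fun n => d (u n) (u (S n))) 0 -> zd_Cauchy d u.
Proof.
  intros Hs Hr Hnra Hc Hu Hrn eps0 Heps0.
  pose proof (tri d Hs Hr) as Htri.
  assert (Hsym : forall a b, d a b = d b a) by (intros; apply Hs).
  apply NNPP; intro Hnc.
  assert (Hbad : forall j, exists m n, (j <= m)%nat /\ (m < n)%nat /\ eps0 <= d (u m) (u n)).
  { intro j. apply NNPP; intro H. apply Hnc. exists j. intros m n Hm Hmn.
    apply Rnot_le_lt. intro H'. apply H. exists m, n. auto. }
  destruct Hnra as [_ [q Hq]].
  destruct (avoid_seq q eps0 Heps0) as [eps [[Heps Heps'] Hqe]].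
  destruct (Hq eps Heps Hqe) as [Hpe [c [delta [Hcl [Hdel Hphi]]]]].
  set (c' := Rmax c (phi eps)).
  assert (Hc' : c' < eps) by (unfold c'; apply Rmax_lub_lt; lra).
  assert (Hphi' : forall t, eps <= t < eps + delta -> phi t <= c').
  { intros t [H1 H2]. destruct H1 as [H1| <-].
    - pose proof (Hphi t (conj H1 H2)). pose proof (Rmax_l c (phi eps)). unfold c'. lra.
    - apply Rmax_r. }
  set (eta := Rmin (Rmin (delta/2) ((eps - c')/2)) eps).
  assert (Heta : eta > 0) by (unfold eta; repeat apply Rmin_glb_lt; lra).
  assert (Heta2 : eta <= delta/2 /\ eta <= (eps-c')/2 /\ eta <= eps).
  { unfold eta. pose proof (Rmin_l (Rmin (delta/2) ((eps - c')/2)) eps).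
    pose proof (Rmin_r (Rmin (delta/2) ((eps - c')/2)) eps).
    pose proof (Rmin_l (delta/2) ((eps - c')/2)).
    pose proof (Rmin_r (delta/2) ((eps - c')/2)). lra. }
  destruct (cv_small _ Hrn eta Heta) as [N HN]. cbv beta in HN.
  destruct (Hbad N) as [m [n [Hm [Hmn Hd]]]].
  assert (Hp1 : ~ eps <= d (u m) (u (S m))) by (intro H; pose proof (HN m Hm); lra).
  assert (Hp2 : eps <= d (u m) (u n)) by lra.
  destruct (first_cross (fun k => eps <= d (u m) (u k)) (S m) n Hp1 Hp2 ltac:(lia))
    as [k [Hk1 [Hk2 [Hk3 Hk4]]]].
  apply Rnot_le_lt in Hk3.
  set (t := d (u m) (u (S k))) in *.
  assert (Hrk0 : d (u k) (u (S k)) < eta) by (apply HN; lia).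
  assert (Hrm : d (u m) (u (S m)) < eta) by (apply HN; lia).
  assert (Hrk : d (u (S k)) (u (S (S k))) < eta) by (apply HN; lia).
  assert (Ht : t < eps + eta) by (pose proof (Htri (u m) (u k) (u (S k))); unfold t; lra).
  assert (B1 : d (u m) (u (S (S k))) <= t + d (u (S k)) (u (S (S k)))) by apply Htri.
  assert (B2 : d (u (S m)) (u (S k)) <= d (u m) (u (S m)) + t).
  { rewrite (Hsym (u m) (u (S m))). apply Htri. }
  assert (Hsb : t <= Gfun g T d (u m) (u (S k)) <= t + eta).
  { destruct g; simpl; unfold M2, M3, Hf, M1, Lf; rewrite <- ?Hu; fold t.
    - lra.
    - split; [apply Rmax_l|]. apply Rmax_lub; [lra| apply Rmax_lub; lra].
    - split; [eapply Rle_trans; [apply Rmax_l | apply Rmax_l]|].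
      apply Rmax_lub; [apply Rmax_lub; [lra| apply Rmax_lub; lra] | lra]. }
  assert (Hps : phi (Gfun g T d (u m) (u (S k))) <= c') by (apply Hphi'; lra).
  pose proof (Hc (u m) (u (S k))) as H. rewrite <- !Hu in H.
  pose proof (Htri (u m) (u (S m)) (u (S k))).
  pose proof (Htri (u (S m)) (u (S (S k))) (u (S k))).
  rewrite (Hsym (u (S (S k))) (u (S k))) in *.
  fold t in H0. lra.
Qed.

Lemma fix_limit (d : X -> X -> R) T g phi (u : nat -> X) z :
  is_symmetric d -> reflexive_triangular d -> normal phi -> maps_nonneg phi ->
  (forall x y, d (T x) (T y) <= phi (Gfun g T d x y)) ->
  (forall n, u (S n) = T (u n)) ->
  Un_cv (fun n => d (u n) z) 0 -> d z (T z) = 0.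
Proof.
  intros Hs Hr Hn Hnn Hc Hu Hz.
  pose proof (tri d Hs Hr) as Htri.
  assert (Hsym : forall a b, d a b = d b a) by (intros; apply Hs).
  destruct (Hs z (T z)) as [Ha _]. destruct Ha as [Ha|Ha]; [exfalso| auto].
  set (a := d z (T z)) in *.
  assert (Hpa : phi a < a) by (apply Hn; lra).
  assert (Hpa0 : 0 <= phi a) by (apply Hnn; lra).
  set (eta := Rmin (a/2) ((a - phi a)/2)).
  assert (Heta : eta > 0) by (unfold eta; apply Rmin_glb_lt; lra).
  assert (Heta2 : eta <= a/2 /\ eta <= (a - phi a)/2).
  { unfold eta. pose proof (Rmin_l (a/2) ((a - phi a)/2)).
    pose proof (Rmin_r (a/2) ((a - phi a)/2)). lra. }
  destruct (cv_small _ Hz eta Heta) as [N HN]. cbv beta in HN.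
  assert (Ht : d (u N) z < eta) by (apply HN; lia).
  assert (Ht' : d (u (S N)) z < eta) by (apply HN; lia).
  assert (Ht0 : 0 <= d (u N) z) by apply Hs.
  assert (Hrn : d (u N) (u (S N)) <= d (u N) z + d (u (S N)) z).
  { rewrite (Hsym (u (S N)) z). apply Htri. }
  assert (Ha1 : a <= d (u (S N)) z + d (u (S N)) (T z)).
  { rewrite (Hsym (u (S N)) z). apply Htri. }
  pose proof (Hc (u N) z) as H. rewrite <- Hu in H.
  assert (HL : d (u N) (T z) <= d (u N) z + a) by apply Htri.
  destruct g; simpl in H; unfold M2, M3, Hf, M1, Lf in H; rewrite <- ?Hu in H; fold a in H.
  - pose proof (phi_le phi Hn _ Ht0). lra.
  - rewrite (Rmax_right _ a), (Rmax_right _ a) in H by lra. lra.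
  - rewrite (Rmax_right _ a), (Rmax_right _ a), Rmax_left in H by lra. lra.
Qed.

Lemma uniq_fix (d : X -> X -> R) T g phi z w :
  is_symmetric d -> reflexive_triangular d -> normal phi ->
  (forall x y, d (T x) (T y) <= phi (Gfun g T d x y)) ->
  d z (T z) = 0 -> d w (T w) = 0 -> d z w = 0.
Proof.
  intros Hs Hr Hn Hc Hz Hw.
  pose proof (tri d Hs Hr) as Htri.
  assert (Hsym : forall a b, d a b = d b a) by (intros; apply Hs).
  assert (Hb : d z w <= d (T z) (T w)).
  { pose proof (Htri z (T z) w). pose proof (Htri (T z) (T w) w).
    rewrite (Hsym (T w) w) in *. lra. }
  pose proof (Hc z w) as H.
  assert (HL1 : d z (T w) <= d z w) by (pose proof (Htri z w (T w)); lra).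
  assert (HL2 : d (T z) w <= d z w) by (pose proof (Htri (T z) z w); rewrite (Hsym (T z) z) in *; lra).
  destruct (Hs z w) as [Hb0 _].
  assert (Hphi : phi (d z w) >= d z w).
  { destruct g; simpl in H; unfold M2, M3, Hf, M1, Lf in H; rewrite ?Hz, ?Hw in H.
    - lra.
    - rewrite (Rmax_left 0 0), Rmax_left in H by lra. lra.
    - rewrite (Rmax_left 0 0), (Rmax_left (d z w) 0), Rmax_left in H by lra. lra. }
  destruct Hb0 as [Hb0|Hb0]; auto.
  pose proof (proj2 Hn _ Hb0). lra.
Qed.

End S.

Theorem theorem2 (X : Type) (x0 : X) (d : X -> X -> R) (T : X -> X)
  (g : Gchoice) (phi : R -> R) :
  is_symmetric d ->
  reflexive_triangular d ->
  zero_complete d ->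
  maps_nonneg phi ->
  nearly_right_admissible phi ->
  asymptotic_normal phi ->
  (forall x y, d (T x) (T y) <= phi (Gfun g T d x y)) ->
  global_Picard T d.
Proof.
  intros Hs Hr Hcomp Hnn Hnra Han Hc.
  pose proof (proj1 Han) as Hn.
  assert (Hrcv : forall x, Un_cv (fun n => d (Nat.iter n T x) (Nat.iter (S n) T x)) 0).
  { intro x. apply (proj2 Han).
    - intro n. apply Hs.
    - intro n. exact (r_step d T g phi Hs Hr Hn Hc (Nat.iter n T x)). }
  assert (Horb : forall x, zd_convergent d (fun n => Nat.iter n T x)).
  { intro x. apply Hcomp. apply (cauchy d T g phi (fun n => Nat.iter n T x) Hs Hr Hnra Hc).
    - intro n. reflexivity.
    - apply Hrcv. }
  assert (Hfix : forall x z, zd_converges_to d (fun n => Nat.iter n T x) z -> Fix T d z).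
  { intros x z Hz. unfold Fix.
    apply (fix_limit d T g phi (fun n => Nat.iter n T x) z Hs Hr Hn Hnn Hc); auto. }
  split; [intro x; split; eauto|].
  split.
  - destruct (Horb x0) as [z Hz]. exists z. eauto.
  - intros y1 y2 H1 H2. exact (uniq_fix d T g phi y1 y2 Hs Hr Hn Hc H1 H2).
Qed.
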